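(* Let $d\ge1$, let $\mathcal{H}_R,\mathcal{H}_A,\mathcal{H}_B$ all be copies of $\mathbb{C}^d$ with standard basis $\{|j\rangle\}_{j=0}^{d-1}$, and let $\mathcal{N}:\mathcal{L}(\mathcal{H}_A)\to\mathcal{L}(\mathcal{H}_B)$ be a quantum channel (completely positive trace-preserving map). Let $\{K_i\}$ be a standard Kraus decomposition of $\mathcal{N}$ (defined in the context), so that $\mathrm{Tr}(K_0^\dagger K_0)\ge \mathrm{Tr}(K_i^\dagger K_i)$ for all $i$. Define $$\mathcal{O}(\mathcal{N}):=\max\Big\{\langle\phi|_{RB}\,(\mathcal{I}_R\otimes\mathcal{N})(\rho_{RA})\,|\phi\rangle_{RB}\;:\;\rho_{RA}\succeq0,\ \mathrm{Tr}\rho_{RA}=1\Big\},$$ where $|\phi\rangle_{RB}=\frac1{\sqrt d}\sum_j|j\rangle_R|j\rangle_B$ and $\mathcal{I}_R$ is the identity map on $\mathcal{L}(\mathcal{H}_R)$. Then $$\mathcal{O}(\mathcal{N})=\frac1d\,\mathrm{Tr}(K_0^\dagger K_0)=\frac1d\,\|J^{\mathcal{N}}_{RB}\|,$$ where $\|\cdot\|$ is the operator (spectral) norm, and the maximum is attained precisely by the density operators $\Lambda_{RA}$ whose support lies in the span of $\{|K_i^\dagger\rangle_{RA}: \mathrm{Tr}(K_i^\dagger K_i)=\mathrm{Tr}(K_0^\dagger K_0)\}$.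
   Context: Choi–Jamiołkowski operator: $J^{\mathcal{N}}_{RB}=\sum_{i,j}|i\rangle\langle j|_R\otimes\mathcal{N}(|i\rangle\langle j|)$. Operator–ket duality: for a linear operator $K$ on $\mathbb{C}^d$, $|K\rangle:=\sum_j |j\rangle\otimes K|j\rangle$; in particular $|K^\dagger\rangle_{RA}:=\sum_j|j\rangle_R\otimes K^\dagger|j\rangle_A$. Standard Kraus decomposition: take an eigendecomposition $J^{\mathcal{N}}_{RB}=\sum_i e_i|L_i\rangle\langle L_i|$ with $e_0\ge e_1\ge\dots\ge0$ and $\{|L_i\rangle\}$ orthonormal, let $L_i$ be the operator with $|L_i\rangle=\sum_j|j\rangle\otimes L_i|j\rangle$, and set $K_i=\sqrt{e_i}L_i$; then $\mathcal{N}(O)=\sum_iK_iOK_i^\dagger$, $\mathrm{Tr}(K_i^\dagger K_j)=0$ for $i\neq j$ and $\mathrm{Tr}(K_i^\dagger K_i)=e_i$. *)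

(* Defs.v *)
From HB Require Import structures.
From mathcomp Require Import all_boot all_order all_algebra.
From mathcomp Require Import reals.
From mathcomp.real_closed Require Export complex mxtens.

Set Implicit Arguments.
Unset Strict Implicit.
Unset Printing Implicit Defensive.

Import Order.TTheory GRing.Theory Num.Theory.
Local Open Scope ring_scope.

Section QDefs.
Variable C : numClosedFieldType.

Definition dag {m n} (A : 'M[C]_(m, n)) : 'M[C]_(n, m) := (map_mx Num.conj A)^T.

Definition psd {n} (A : 'M[C]_n) : Prop :=
  dag A = A /\ forall v : 'cV[C]_n, 0 <= (dag v *m A *m v) 0 0.

Definition density {n} (rho : 'M[C]_n) : Prop := psd rho /\ \tr rho = 1.

(* The composite space H_X (x) H_Y = C^m (x) C^n is C^(m*n) with basis
   |i>|j> = e_(mxtens_index (i, j)) (first factor = most significant). *)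

Definition blockR {k d} (X : 'M[C]_(k * d)) (i j : 'I_k) : 'M[C]_d :=
  \matrix_(a, b) X (mxtens_index (i, a)) (mxtens_index (j, b)).

(* (I_R (x) N)(X) = sum_{i,j} |i><j| (x) N(<i| X |j>) *)
Definition idR_tens {k d} (N : 'M[C]_d -> 'M[C]_d) (X : 'M[C]_(k * d))
  : 'M[C]_(k * d) :=
  \sum_(i < k) \sum_(j < k) (delta_mx i j *t N (blockR X i j)).

Definition completely_positive {d} (N : 'M[C]_d -> 'M[C]_d) : Prop :=
  forall (k : nat) (X : 'M[C]_(k * d)), psd X -> psd (idR_tens N X).

Definition trace_preserving {d} (N : 'M[C]_d -> 'M[C]_d) : Prop :=
  forall X : 'M[C]_d, \tr (N X) = \tr X.

Definition choi {d} (N : 'M[C]_d -> 'M[C]_d) : 'M[C]_(d * d) :=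
  \sum_(i < d) \sum_(j < d) (delta_mx i j *t N (delta_mx i j)).

(* operator-ket duality |K> = sum_j |j> (x) K|j> *)
Definition opket {d} (K : 'M[C]_d) : 'cV[C]_(d * d) :=
  \col_k K (mxtens_unindex k).2 (mxtens_unindex k).1.

Definition ketop {d} (v : 'cV[C]_(d * d)) : 'M[C]_d :=
  \matrix_(b, j) v (mxtens_index (j, b)) 0.

Definition maxent (d : nat) : 'cV[C]_(d * d) :=
  (sqrtC d%:R)^-1 *: \sum_(j < d) delta_mx (mxtens_index (j, j)) 0.

Definition fid_value {d} (N : 'M[C]_d -> 'M[C]_d) (rho : 'M[C]_(d * d)) : C :=
  (dag (maxent d) *m idR_tens N rho *m maxent d) 0 0.

Definition is_O_value {d} (N : 'M[C]_d -> 'M[C]_d) (x : C) : Prop :=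
  (exists rho : 'M[C]_(d * d), density rho /\ fid_value N rho = x) /\
  (forall rho : 'M[C]_(d * d), density rho -> fid_value N rho <= x).

Definition vnorm {n} (v : 'cV[C]_n) : C := sqrtC ((dag v *m v) 0 0).

Definition is_opnorm {n} (A : 'M[C]_n) (s : C) : Prop :=
  (exists v : 'cV[C]_n, vnorm v = 1 /\ vnorm (A *m v) = s) /\
  (forall v : 'cV[C]_n, vnorm v = 1 -> vnorm (A *m v) <= s).

Definition sorted_eigendecomposition {d} (J : 'M[C]_(d * d))
  (e : 'I_(d * d) -> C) (L : 'I_(d * d) -> 'cV[C]_(d * d)) : Prop :=
  [/\ forall i j : 'I_(d * d), (dag (L i) *m L j) 0 0 = (i == j)%:R,
      J = \sum_(i < d * d) e i *: (L i *m dag (L i)),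
      forall i : 'I_(d * d), 0 <= e i &
      forall i j : 'I_(d * d), (i <= j)%N -> e j <= e i].

Definition std_kraus {d} (e : 'I_(d * d) -> C) (L : 'I_(d * d) -> 'cV[C]_(d * d))
  (i : 'I_(d * d)) : 'M[C]_d := sqrtC (e i) *: ketop (L i).

(* matrix whose row space = span{ |K_i^dagger>^T : Tr(K_i^dag K_i) = Tr(K_i0^dag K_i0) } *)
Definition top_kraus_span {d} (K : 'I_(d * d) -> 'M[C]_d) (i0 : 'I_(d * d))
  : 'M[C]_(d * d) :=
  \matrix_(i < d * d)
     (if \tr (dag (K i) *m K i) == \tr (dag (K i0) *m K i0)
      then (opket (dag (K i)))^T else 0).

(* supp(rho) = column space of rho is contained in the column span of the
   vectors of S (rows of S) *)
Definition support_in {n} (rho S : 'M[C]_n) : Prop := (rho^T <= S)%MS.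

End QDefs.

(* Main.v *)
Require Import Defs.
From HB Require Import structures.
From mathcomp Require Import all_boot all_order all_algebra.
From mathcomp Require Import reals.
From mathcomp.real_closed Require Import complex mxtens.
From mathcomp Require Import ring lra.

Set Implicit Arguments.
Unset Strict Implicit.
Unset Printing Implicit Defensive.
Import Order.TTheory GRing.Theory Num.Theory.
Local Open Scope ring_scope.

Section Gen.
Variable C : numClosedFieldType.

Lemma dagE m n (A : 'M[C]_(m, n)) i j : dag A i j = (A j i)^*.
Proof. by rewrite /dag !mxE. Qed.

Lemma dagK m n (A : 'M[C]_(m, n)) : dag (dag A) = A.
Proof. by apply/matrixP => i j; rewrite !dagE conjCK. Qed.

Lemma dag_mul m n p (A : 'M[C]_(m, n)) (B : 'M[C]_(n, p)) :
  dag (A *m B) = dag B *m dag A.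
Proof.
apply/matrixP => i j; rewrite dagE !mxE rmorph_sum; apply: eq_bigr => k _.
by rewrite !dagE rmorphM mulrC.
Qed.

Lemma dagD m n (A B : 'M[C]_(m, n)) : dag (A + B) = dag A + dag B.
Proof. by apply/matrixP => i j; rewrite !dagE !mxE rmorphD. Qed.

Lemma dagN m n (A : 'M[C]_(m, n)) : dag (- A) = - dag A.
Proof. by apply/matrixP => i j; rewrite !dagE !mxE rmorphN. Qed.

Lemma dagZ m n (c : C) (A : 'M[C]_(m, n)) : dag (c *: A) = c^* *: dag A.
Proof. by apply/matrixP => i j; rewrite !dagE !mxE rmorphM. Qed.

Lemma dag_sum m n (I : finType) (F : I -> 'M[C]_(m, n)) :
  dag (\sum_i F i) = \sum_i dag (F i).
Proof.
apply/matrixP => i j; rewrite dagE !summxE rmorph_sum.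
by apply: eq_bigr => k _; rewrite dagE.
Qed.

Lemma ipE n (u v : 'cV[C]_n) : (dag u *m v) 0 0 = \sum_x (u x 0)^* * v x 0.
Proof. by rewrite mxE; apply: eq_bigr => x _; rewrite dagE. Qed.

Lemma qfE n (v : 'cV[C]_n) (A : 'M[C]_n) :
  (dag v *m A *m v) 0 0 = \sum_x \sum_y (v x 0)^* * A x y * v y 0.
Proof.
rewrite mxE exchange_big /=; apply: eq_bigr => y _.
rewrite mxE mulr_suml; apply: eq_bigr => x _; by rewrite dagE.
Qed.

Lemma ip_ge0 n (u : 'cV[C]_n) : 0 <= (dag u *m u) 0 0.
Proof.
rewrite ipE; apply: sumr_ge0 => x _; rewrite mulrC; exact: mul_conjC_ge0.
Qed.

Lemma ip_eq0 n (u : 'cV[C]_n) : (dag u *m u) 0 0 = 0 -> u = 0.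
Proof.
rewrite ipE => H; apply/matrixP => x j; rewrite (ord1 j) mxE.
have hge : forall i, true -> 0 <= (u i 0)^* * u i 0.
  by move=> i _; rewrite mulrC; exact: mul_conjC_ge0.
have := @psumr_eq0P _ _ _ _ hge H x isT.
by rewrite mulrC => /eqP; rewrite mul_conjC_eq0 => /eqP.
Qed.

Definition orthonormal n (u : 'I_n -> 'cV[C]_n) :=
  forall i j, (dag (u i) *m u j) 0 0 = (i == j)%:R.

Lemma complete n (u : 'I_n -> 'cV[C]_n) : orthonormal u ->
  \sum_i u i *m dag (u i) = 1%:M.
Proof.
move=> hu; pose U := \matrix_(x, i) u i x 0.
have h1 : dag U *m U = 1%:M.
  apply/matrixP => i j; rewrite !mxE -hu ipE; apply: eq_bigr => x _.
  by rewrite dagE !mxE.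
have h2 := mulmx1C h1.
rewrite -h2; apply/matrixP => x y; rewrite summxE mxE.
apply: eq_bigr => i _; rewrite !dagE !mxE big_ord1 !dagE.
by [].

Qed.

Lemma qf_tr n (v : 'cV[C]_n) (A : 'M[C]_n) :
  (dag v *m A *m v) 0 0 = \tr (A *m (v *m dag v)).
Proof.
by rewrite -trace_mx11 mxtrace_mulC [RHS]mxtrace_mulC mulmxA.
Qed.

Lemma sum_qf n (u : 'I_n -> 'cV[C]_n) (A : 'M[C]_n) : orthonormal u ->
  \sum_i (dag (u i) *m A *m u i) 0 0 = \tr A.
Proof.
move=> hu; under eq_bigr do rewrite qf_tr.
by rewrite -raddf_sum /= -mulmx_sumr complete // mulmx1.
Qed.

Lemma qf_rank1 n (u v : 'cV[C]_n) :
  (dag v *m (u *m dag u) *m v) 0 0 = ((dag u *m v) 0 0)^* * (dag u *m v) 0 0.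
Proof.
rewrite !mulmxA -(mulmxA _ (dag u)) mxE big_ord1; congr (_ * _).
by rewrite -dagE dag_mul dagK.
Qed.

Lemma qf_rank1_ge0 n (u v : 'cV[C]_n) : 0 <= (dag v *m (u *m dag u) *m v) 0 0.
Proof. by rewrite qf_rank1 mulrC; exact: mul_conjC_ge0. Qed.

Lemma psd_zero n (A : 'M[C]_n) (v : 'cV[C]_n) :
  psd A -> (dag v *m A *m v) 0 0 = 0 -> A *m v = 0.
Proof.
move=> [hA hpos] h0; set w := A *m v.
have [c0|cne] := eqVneq ((dag w *m w) 0 0) 0; first exact: ip_eq0.
exfalso.
set c := (dag w *m w) 0 0 in cne *.
have cpos : 0 < c by rewrite lt_def cne ip_ge0.
set a := (dag w *m A *m w) 0 0.
have a0 : 0 <= a := hpos w.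
set lam := (a + 1) / (c *+ 2).
have lam0 : 0 <= lam.
  by apply: divr_ge0; [exact: addr_ge0 a0 ler01 | exact: mulrn_wge0 (ltW cpos)].
have key := hpos (w - lam *: v).
have h1 : dag w *m A *m v = dag w *m w by rewrite /w dag_mul hA -!mulmxA.
have h2 : dag v *m A *m w = dag w *m w by rewrite /w dag_mul hA !mulmxA.
move: key; rewrite dagD dagN dagZ (geC0_conj lam0) !mulmxDl !mulmxDr !mulNmx !mulmxN.
rewrite -!scalemxAl -!scalemxAr h1 h2 [dag w *m w]mx11_scalar [dag w *m A *m w]mx11_scalar [dag v *m A *m v]mx11_scalar h0 -/c -/a !mxE !eqxx !mulr1n.
have -> : a - lam * c + (- (lam * c) - - (lam * (lam * 0))) = - (1 : C).
  rewrite /lam; field.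
  exact: cne.
by rewrite oppr_ge0 ler10.
Qed.


Lemma sum_idx m n (F : 'I_(m * n) -> C) :
  \sum_x F x = \sum_(i < m) \sum_(j < n) F (mxtens_index (i, j)).
Proof.
rewrite pair_big /= (reindex (@mxtens_index m n)) /=.
  by apply: eq_bigr => -[i j].
by exists (@mxtens_unindex m n) => x _; [exact: mxtens_indexK | exact: mxtens_unindexK].
Qed.

Lemma sum_delta n (j : 'I_n) (F : 'I_n -> C) :
  \sum_a ((j == a)%:R * F a) = F j.
Proof.
rewrite (bigD1 j) //= eqxx mul1r big1 ?addr0 // => a /negbTE.
by rewrite eq_sym => ->; rewrite mul0r.
Qed.

Lemma blocksum k d (M : 'I_k -> 'I_k -> 'M[C]_d) a x c y :
  (\sum_(i < k) \sum_(j < k) (delta_mx i j *t M i j))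
     (mxtens_index (a, x)) (mxtens_index (c, y)) = M a c x y.
Proof.
rewrite summxE (bigD1 a) //= [X in _ + X]big1 => [|i ne].
  rewrite addr0 summxE (bigD1 c) //= [X in _ + X]big1 => [|j ne].
    by rewrite addr0 tensmxE mxE !eqxx mul1r.
  by rewrite tensmxE mxE eqxx eq_sym (negbTE ne) mul0r.
rewrite summxE big1 // => j _.
by rewrite tensmxE mxE eq_sym (negbTE ne) mul0r.
Qed.

Lemma choiE d (N : 'M[C]_d -> 'M[C]_d) a x c y :
  choi N (mxtens_index (a, x)) (mxtens_index (c, y)) = N (delta_mx a c) x y.
Proof. exact: blocksum. Qed.

Lemma idRE k d (N : 'M[C]_d -> 'M[C]_d) (X : 'M[C]_(k * d)) a x c y :
  idR_tens N X (mxtens_index (a, x)) (mxtens_index (c, y))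
  = N (blockR X a c) x y.
Proof. exact: blocksum. Qed.

Lemma linE d (N : {linear 'M[C]_d -> 'M[C]_d}) (X : 'M[C]_d) x y :
  N X x y = \sum_a \sum_c X a c * N (delta_mx a c) x y.
Proof.
rewrite {1}(matrix_sum_delta X) linear_sum summxE; apply: eq_bigr => a _.
rewrite linear_sum summxE; apply: eq_bigr => c _.
by rewrite linearZ mxE.
Qed.

Lemma maxentE d a b :
  maxent C d (mxtens_index (a, b)) 0 = (sqrtC (d%:R : C))^-1 * (a == b)%:R.
Proof.
rewrite /maxent mxE summxE; congr (_ * _).
transitivity (\sum_(j < d) ((a == j)%:R * (b == j)%:R : C)).
  apply: eq_bigr => j _; rewrite mxE eqxx andbT.
  rewrite (inj_eq (can_inj (@mxtens_indexK d d))) xpair_eqE.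
  by rewrite -natrM mulnb.
by rewrite sum_delta eq_sym.
Qed.

Lemma fid_maxent d (hd : (0 < d)%N) (Y : 'M[C]_(d * d)) :
  (dag (maxent C d) *m Y *m maxent C d) 0 0
  = (d%:R)^-1 * \sum_(j < d) \sum_(k < d) Y (mxtens_index (j, j)) (mxtens_index (k, k)).
Proof.
set s := sqrtC (d%:R : C).
have s0 : 0 <= s^-1 by rewrite invr_ge0 sqrtC_ge0 ler0n.
rewrite qfE sum_idx.
transitivity (\sum_(j < d) \sum_(k < d)
   s^-1 * s^-1 * Y (mxtens_index (j, j)) (mxtens_index (k, k))).
  apply: eq_bigr => j _.
  rewrite (bigD1 j) //= [X in _ + X]big1 => [|a ne]; last first.
    rewrite big1 // => y _; rewrite maxentE eq_sym (negbTE ne) mulr0 rmorph0.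
    by rewrite !mul0r.
  rewrite addr0 sum_idx; apply: eq_bigr => k _.
  rewrite (bigD1 k) //= [X in _ + X]big1 => [|c ne]; last first.
    by rewrite [maxent _ _ (mxtens_index (k, c)) 0]maxentE (eq_sym k c) (negbTE ne) !mulr0.
  rewrite addr0 !maxentE !eqxx !mulr1 (geC0_conj s0).
  by rewrite mulrC mulrA.
rewrite mulr_sumr; apply: eq_bigr => j _; rewrite mulr_sumr; apply: eq_bigr => k _.
congr (_ * _); rewrite -invfM -expr2 /s sqrtCK //.
Qed.


Lemma umul n (u : 'I_n -> 'cV[C]_n) i j : orthonormal u ->
  dag (u i) *m u j = ((i == j)%:R)%:M.
Proof. by move=> hu; rewrite [LHS]mx11_scalar hu. Qed.

Lemma proj_mul n (u : 'I_n -> 'cV[C]_n) (f g : 'I_n -> C) : orthonormal u ->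
  (\sum_i f i *: (u i *m dag (u i))) *m (\sum_j g j *: (u j *m dag (u j)))
  = \sum_i (f i * g i) *: (u i *m dag (u i)).
Proof.
move=> hu; rewrite mulmx_suml; apply: eq_bigr => i _.
rewrite mulmx_sumr (bigD1 i) //= [X in _ + X]big1 => [|j ne].
  rewrite addr0 -scalemxAl -scalemxAr scalerA !mulmxA -(mulmxA (u i)).
  by rewrite umul // eqxx mul_mx_scalar scale1r.
rewrite -scalemxAl -scalemxAr !mulmxA -(mulmxA (u i)) umul // eq_sym (negbTE ne).
by rewrite mul_mx_scalar scale0r mul0mx !scaler0.
Qed.

Lemma qf_lin n (I : finType) (c : I -> C) (A : I -> 'M[C]_n) (v : 'cV[C]_n) :
  (dag v *m (\sum_i c i *: A i) *m v) 0 0 = \sum_i c i * (dag v *m A i *m v) 0 0.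
Proof.
rewrite mulmx_sumr mulmx_suml summxE; apply: eq_bigr => i _.
by rewrite -scalemxAr -scalemxAl mxE.
Qed.


Lemma dag0 m n : dag (0 : 'M[C]_(m, n)) = 0.
Proof. by apply/matrixP => i j; rewrite dagE !mxE rmorph0. Qed.

End Gen.

Section Main.
Variable C : numClosedFieldType.
Variable d : nat.
Hypothesis hd : (0 < d)%N.
Variable N : {linear 'M[C]_d -> 'M[C]_d}.
Hypothesis hTP : trace_preserving N.
Variable e : 'I_(d * d) -> C.
Variable L : 'I_(d * d) -> 'cV[C]_(d * d).
Hypothesis hJ : sorted_eigendecomposition (choi N) e L.
Variable i0 : 'I_(d * d).
Hypothesis hi0 : nat_of_ord i0 = 0%N.

Definition sw (x : 'I_(d * d)) : 'I_(d * d) :=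
  mxtens_index ((mxtens_unindex x).2, (mxtens_unindex x).1).

Lemma swE a b : sw (mxtens_index (a, b)) = mxtens_index (b, a).
Proof. by rewrite /sw mxtens_indexK. Qed.

Lemma swK : involutive sw.
Proof. by move=> x; case: (mxtens_indexP x) => a b; rewrite !swE. Qed.

Definition l i : 'cV[C]_(d * d) := \col_x (L i (sw x) 0)^*.

Lemma ON : orthonormal L. Proof. by case: hJ. Qed.
Lemma Jdef : choi N = \sum_(i < d * d) e i *: (L i *m dag (L i)).
Proof. by case: hJ. Qed.
Lemma ege i : 0 <= e i. Proof. by case: hJ. Qed.
Lemma ele i : e i <= e i0.
Proof. by case: hJ => _ _ _ h; apply: h; rewrite hi0. Qed.

Lemma lON : orthonormal l.
Proof.
move=> i j; rewrite ipE -[(i == j)%:R]conjC_nat -ON ipE rmorph_sum.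
rewrite [RHS](reindex_inj (inv_inj swK)) /=; apply: eq_bigr => x _.
by rewrite /l !mxE rmorphM /= !conjCK.
Qed.

Lemma Jentry p q : choi N p q = \sum_i e i * (L i p 0 * (L i q 0)^*).
Proof.
rewrite Jdef summxE; apply: eq_bigr => i _.
by rewrite mxE mxE big_ord1 dagE.
Qed.

Lemma fidE rho : fid_value N rho
  = (d%:R)^-1 * \sum_i e i * (dag (l i) *m rho *m l i) 0 0.
Proof.
rewrite /fid_value fid_maxent //; congr (_ * _).
transitivity (\sum_x \sum_y rho x y * choi N (sw x) (sw y)).
  rewrite [RHS]sum_idx; apply: eq_bigr => j _.
  under eq_bigr do rewrite idRE linE.
  rewrite exchange_big /=; apply: eq_bigr => a _.
  rewrite sum_idx; apply: eq_bigr => k _; apply: eq_bigr => c _.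
  by rewrite mxE !swE choiE.
under [RHS]eq_bigr do rewrite qfE mulr_sumr.
rewrite [RHS]exchange_big /=; apply: eq_bigr => x _.
under [RHS]eq_bigr do rewrite mulr_sumr.
rewrite [RHS]exchange_big /=; apply: eq_bigr => y _.
rewrite Jentry mulr_sumr; apply: eq_bigr => i _.
rewrite !mxE conjCK; ring.
Qed.

Definition K := std_kraus e L.

Lemma trK i : \tr (dag (K i) *m K i) = e i.
Proof.
rewrite /K /std_kraus dagZ -scalemxAl -scalemxAr !mxtraceZ.
have -> : \tr (dag (ketop (L i)) *m ketop (L i)) = 1.
  transitivity ((i == i)%:R : C); last by rewrite eqxx.
  rewrite -ON ipE sum_idx.
  rewrite /mxtrace; apply: eq_bigr => j _; rewrite mxE; apply: eq_bigr => b _.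
  by rewrite dagE !mxE.
by rewrite mulr1 geC0_conj ?sqrtC_ge0 ?ege // -expr2 sqrtCK.
Qed.

Lemma opketK i : opket (dag (K i)) = sqrtC (e i) *: l i.
Proof.
apply/matrixP => x j; rewrite (ord1 j); case: (mxtens_indexP x) => a b.
rewrite /opket /l !mxE -/(sw _) rmorphM /= geC0_conj // sqrtC_ge0; exact: ege.
Qed.


Lemma e0pos : 0 < e i0.
Proof.
rewrite lt_def ege andbT; apply/negP => /eqP h0.
have eall i : e i = 0 by apply: le_anti; rewrite ege andbT -h0 ele.
have Jz : choi N = 0 by rewrite Jdef big1 // => i _; rewrite eall scale0r.
pose o := Ordinal hd.
have Nz : N (delta_mx o o) = 0.
  by apply/matrixP => x y; rewrite -choiE Jz !mxE.
have trd : \tr (delta_mx o o : 'M[C]_d) = 1.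
  rewrite /mxtrace (bigD1 o) //= mxE eqxx big1 ?addr0 // => k ne.
  by rewrite mxE (negbTE ne).
by have := hTP (delta_mx o o); rewrite Nz mxtrace0 trd => /eqP; rewrite eq_sym oner_eq0.
Qed.

Lemma q_ge0 rho i : density rho -> 0 <= (dag (l i) *m rho *m l i) 0 0.
Proof. by case=> -[_ h] _; exact: h. Qed.

Lemma sumq rho : density rho -> \sum_i (dag (l i) *m rho *m l i) 0 0 = 1.
Proof. by case=> _ h; rewrite sum_qf //; exact: lON. Qed.

Lemma fid_le rho : density rho -> fid_value N rho <= (d%:R)^-1 * e i0.
Proof.
move=> hr; rewrite fidE ler_wpM2l ?invr_ge0 ?ler0n //.
apply: le_trans (_ : \sum_i e i0 * (dag (l i) *m rho *m l i) 0 0 <= _).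
  by apply: ler_sum => i _; rewrite ler_wpM2r ?q_ge0 ?ele.
by rewrite -mulr_sumr sumq // mulr1.
Qed.

Lemma rank1_density (u : 'cV[C]_(d * d)) : (dag u *m u) 0 0 = 1 ->
  density (u *m dag u).
Proof.
move=> hu; split; first split.
- by rewrite dag_mul dagK.
- by move=> v; exact: qf_rank1_ge0.
by rewrite mxtrace_mulC trace_mx11.
Qed.

Lemma fid_l0 : fid_value N (l i0 *m dag (l i0)) = (d%:R)^-1 * e i0.
Proof.
rewrite fidE; congr (_ * _).
rewrite (bigD1 i0) //= qf_rank1 lON eqxx rmorph1 !mulr1 big1 ?addr0 // => i ne.
by rewrite qf_rank1 lON eq_sym (negbTE ne) !mulr0.
Qed.


Lemma Jherm : dag (choi N) = choi N.
Proof.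
rewrite Jdef dag_sum; apply: eq_bigr => i _.
by rewrite dagZ dag_mul dagK geC0_conj // ege.
Qed.

Lemma opnorm : is_opnorm (choi N) (e i0).
Proof.
have e0 := ege i0.
split.
  exists (L i0); split; first by rewrite /vnorm ON eqxx sqrtC1.
  have -> : choi N *m L i0 = e i0 *: L i0.
    rewrite Jdef mulmx_suml (bigD1 i0) //= [X in _ + X]big1 => [|i ne].
      by rewrite addr0 -scalemxAl -mulmxA umul ?eqxx ?mulmx1 //; exact: ON.
    rewrite -scalemxAl -mulmxA umul ?(negbTE ne); last exact: ON.
    by rewrite mul_mx_scalar scale0r scaler0.
  rewrite /vnorm dagZ -scalemxAl -scalemxAr mxE mxE ON eqxx mulr1.
  by rewrite geC0_conj // -expr2 sqrCK.
move=> v; rewrite /vnorm => hv.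
have vv : (dag v *m v) 0 0 = 1 by rewrite -(sqrtCK ((dag v *m v) 0 0)) hv expr1n.
rewrite -(sqrCK e0) ler_sqrtC ?nnegrE ?ip_ge0 ?exprn_ge0 //.
rewrite dag_mul Jherm mulmxA -(mulmxA (dag v)) {1 2}Jdef proj_mul; last exact: ON.
rewrite qf_lin.
apply: le_trans (_ : \sum_i e i0 ^+ 2 * (dag v *m (L i *m dag (L i)) *m v) 0 0 <= _).
  apply: ler_sum => i _; rewrite ler_wpM2r ?qf_rank1_ge0 // expr2.
  by apply: ler_pM; rewrite ?ege ?ele.
rewrite -qf_lin -scaler_sumr complete; last exact: ON.
by rewrite -scalemxAr -scalemxAl mulmx1 mxE vv mulr1.
Qed.


Notation q rho i := ((dag (l i) *m rho *m l i) 0 0).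

Lemma fid_iff rho : density rho ->
  (fid_value N rho = (d%:R)^-1 * e i0 <-> forall i, e i != e i0 -> q rho i = 0).
Proof.
move=> hr; have dn0 : (d%:R : C)^-1 != 0 by rewrite invr_eq0 pnatr_eq0 -lt0n.
rewrite fidE; split.
  move=> /(mulfI dn0) h i ne.
  have hs : \sum_i (e i0 - e i) * q rho i = 0.
    under eq_bigr do rewrite mulrBl.
    by rewrite sumrB -mulr_sumr sumq // mulr1 h subrr.
  have hge : forall j, true -> 0 <= (e i0 - e j) * q rho j.
    by move=> j _; rewrite mulr_ge0 ?q_ge0 // subr_ge0 ele.
  have := @psumr_eq0P _ _ _ _ hge hs i isT.
  move=> /eqP; rewrite mulf_eq0 subr_eq0 eq_sym (negbTE ne) /= => /eqP //.
move=> h; congr (_ * _).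
rewrite -[e i0]mulr1 -(sumq hr) mulr_sumr; apply: eq_bigr => i _.
by have [->|ne] := eqVneq (e i) (e i0); last rewrite h // !mulr0.
Qed.


Lemma Sentry i x : top_kraus_span K i0 i x
  = (if e i == e i0 then sqrtC (e i) * l i x 0 else 0).
Proof.
rewrite mxE !trK; case: ifP => _; last by rewrite mxE.
by rewrite mxE opketK mxE.
Qed.

Lemma supp_iff rho : density rho ->
  ((forall i, e i != e i0 -> q rho i = 0) <-> support_in rho (top_kraus_span K i0)).
Proof.
move=> hr; have [[hH hpos] _] := hr; set S := top_kraus_span K i0.
split => [h | /submxP [X hX] i ne].
  have hz i : e i != e i0 -> dag (l i) *m rho = 0.
    move=> ne; have h0 := psd_zero hr.1 (h i ne).
    by rewrite -hH -dag_mul h0 dag0.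
  have rhoE : rho = \sum_i l i *m (dag (l i) *m rho).
    rewrite -[LHS]mul1mx -(complete lON) mulmx_suml.
    by apply: eq_bigr => i _; rewrite mulmxA.
  rewrite /support_in rhoE linear_sum /=; apply: summx_sub => i _.
  rewrite trmx_mul.
  have [top|ne] := eqVneq (e i) (e i0); last first.
    by rewrite hz // trmx0 mul0mx sub0mx.
  have rowS : row i S = sqrtC (e i0) *: (l i)^T.
    apply/matrixP => r x; rewrite (ord1 r) [LHS]mxE Sentry top eqxx.
    by rewrite !mxE.
  have -> : (l i)^T = (sqrtC (e i0))^-1 *: row i S.
    rewrite rowS scalerA mulVf ?scale1r // sqrtC_eq0.
    by rewrite (gt_eqF e0pos).
  rewrite -scalemxAr scalemx_sub //.
  exact: submx_trans (submxMl _ _) (row_sub _ _).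
have hS : dag (l i) *m S^T = 0.
  apply/matrixP => r k; rewrite (ord1 r) [RHS]mxE mxE.
  under eq_bigr do rewrite [S^T _ _]mxE /S Sentry dagE.
  have [top|nk] := eqVneq (e k) (e i0); last first.
    by rewrite big1 // => x _; rewrite mulr0.
  under eq_bigr do rewrite mulrCA.
  rewrite -mulr_sumr.
  have := lON i k; rewrite ipE => ->.
  have -> : (i == k) = false.
    by apply/negbTE; apply: contra ne => /eqP ->; rewrite top.
  by rewrite mulr0.
by rewrite -[rho]trmxK hX trmx_mul mulmxA hS !mul0mx mxE.
Qed.

End Main.

Unset Implicit Arguments.
Set Strict Implicit.

Theorem theorem1 (R : realType) (d : nat) (hd : (0 < d)%N)
  (N : {linear 'M[R[i]]_d -> 'M[R[i]]_d})
  (hCP : completely_positive N) (hTP : trace_preserving N)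
  (e : 'I_(d * d) -> R[i]) (L : 'I_(d * d) -> 'cV[R[i]]_(d * d))
  (hJ : sorted_eigendecomposition (choi N) e L)
  (i0 : 'I_(d * d)) (hi0 : nat_of_ord i0 = 0%N) :
  let K := std_kraus e L in
  let O := (d%:R)^-1 * \tr (dag (K i0) *m K i0) in
  [/\ is_O_value N O,
      is_opnorm (choi N) (d%:R * O) &
      forall rho : 'M[R[i]]_(d * d), density rho ->
        (fid_value N rho = O <-> support_in rho (top_kraus_span K i0))].
Proof.
move=> K0 O.
have HO : O = (d%:R)^-1 * e i0 by rewrite /O /K0 (trK hJ).
split.
- split.
    exists (l L i0 *m dag (l L i0)); split.
      by apply: rank1_density; rewrite (lON hJ) eqxx.
    by rewrite HO (fid_l0 hd hJ).
  by move=> rho hr; rewrite HO; exact: (fid_le hd hJ hi0 hr).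
- rewrite HO mulrA mulfV ?mul1r ?pnatr_eq0 -?lt0n //; exact: (opnorm hJ hi0).
move=> rho hr; rewrite HO.
exact: (iff_trans (fid_iff hd hJ hi0 hr) (supp_iff hd hTP hJ hi0 hr)).
Qed.
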